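(* Let $n\in\mathbb{N}$, $\mathcal{R}\subset\mathcal{H}_n$ non-empty, $\mathbb{T}$ a generator set of $\mathcal{R}$, and $A\subset[n]$ non-empty. Set $\mathcal{G}_0=\mathcal{O}_A$ and fix $|\psi_0\rangle\in\mathcal{R}$. For $q=1,2,\dots$, as long as $\mathcal{G}(\mathbb{T})\setminus\bigcup_{i=0}^{q-1}\mathcal{G}_i\neq\emptyset$, choose $P_q$ in this set and put $\mathcal{G}_q=\{P_qP : P\in\mathcal{G}_0\}$; let $m$ be the largest $q$ for which this choice was made ($m=0$ if none). Put $\mathcal{R}_i=\{P|\psi_0\rangle : P\in\mathcal{G}_i\}$ for $i=0,\dots,m$. Then $\mathcal{R}/{\sim_A}=\{\mathcal{R}_0,\dots,\mathcal{R}_m\}$. Moreover, if all elements of $\mathbb{T}$ are self-inverse and $\mathbb{T}$ is pointwise-disjoint, then every equivalence class in $\mathcal{R}/{\sim_A}$ has cardinality $|\mathcal{O}_A|$.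
   Context: $[n]=\{1,\dots,n\}$; $\mathcal{H}_n$ is the computational basis of $n$ qubits. For $|\psi\rangle=|a_1\dots a_n\rangle$ and non-empty $A=\{i_1<\dots<i_m\}$, $|\psi_A\rangle=|a_{i_1}\dots a_{i_m}\rangle$. $|\psi\rangle\sim_A|\phi\rangle$ iff $|\psi_A\rangle=|\phi_A\rangle$ (for $|\psi\rangle,|\phi\rangle\in\mathcal{R}$); $\mathcal{R}/{\sim_A}$ is its set of classes. For a set $F$ of maps $\mathcal{R}\to\mathcal{R}$, $\mathcal{G}(F)$ is its closure under composition. $\mathbb{T}$ (a set of maps $\mathcal{R}\to\mathcal{R}$) is a generator set of $\mathcal{R}$ if: (i) all elements of $\mathcal{G}(\mathbb{T})$ commute pairwise; (ii) for all $|\psi\rangle,|\phi\rangle\in\mathcal{R}$ some $P\in\mathcal{G}(\mathbb{T})$ has $P|\psi\rangle=|\phi\rangle$; (iii) for every $P\in\mathbb{T}$ and non-empty $B\subset[n]$, if $(P|\psi\rangle)_B=|\psi_B\rangle$ for some $|\psi\rangle\in\mathcal{R}$ then $(P|\phi\rangle)_B=|\phi_B\rangle$ for all $|\phi\rangle\in\mathcal{R}$. $\mathbb{T}$ is pointwise-disjoint if for all $P,T\in\mathcal{G}(\mathbb{T})$, $P|\psi\rangle=T|\psi\rangle$ for some $|\psi\rangle\in\mathcal{R}$ implies $P=T$. $\mathcal{O}_A=\{P\in\mathcal{G}(\mathbb{T}) : (P|\psi\rangle)_A=|\psi_A\rangle\ \forall|\psi\rangle\in\mathcal{R}\}$. 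*)

(* Defs.v *)
From mathcomp Require Import all_boot.
Set Implicit Arguments. Unset Strict Implicit. Unset Printing Implicit Defensive.

(* Computational basis states of n qubits: |a_1 ... a_n>, encoded as the
   function i |-> a_(i+1) on the index type 'I_n = {0,...,n-1}
   (qubit positions are 0-based here instead of [n] = {1,...,n}). *)
Definition qstate (n : nat) := {ffun 'I_n -> bool}.

Notation elt R := {x : qstate _ | x \in R}.

Notation rmap R := {ffun elt R -> elt R}.

Definition mcomp n (R : {set qstate n}) (P T : rmap R) : rmap R :=
  [ffun x => P (T x)].

Definition mid n (R : {set qstate n}) : rmap R := [ffun x => x].

(* |psi_A> : the sub-string (a_{i_1} ... a_{i_m}) for A = {i_1 < ... < i_m}. *)
Definition restr n (A : {set 'I_n}) (psi : qstate n) : seq bool :=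
  [seq psi i | i <- enum A].

Definition simA n (R : {set qstate n}) (A : {set 'I_n}) (psi phi : elt R) : Prop :=
  restr A (val psi) = restr A (val phi).

Definition quotA n (R : {set qstate n}) (A : {set 'I_n}) : {set {set elt R}} :=
  [set [set y | restr A (val y) == restr A (val x)] | x : elt R].

Definition gclos n (R : {set qstate n}) (F : {set rmap R}) : {set rmap R} :=
  \bigcap_(S : {set rmap R} | (F \subset S) &&
      [forall P in S, forall T in S, mcomp P T \in S]) S.

Definition generator_set n (R : {set qstate n}) (TT : {set rmap R}) : Prop :=
  [/\ (forall P T, P \in gclos TT -> T \in gclos TT -> mcomp P T = mcomp T P),
      (forall psi phi : elt R, exists2 P, P \in gclos TT & P psi = phi) &
      (forall P (B : {set 'I_n}), P \in TT -> B != set0 ->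
         forall psi : elt R, restr B (val (P psi)) = restr B (val psi) ->
         forall phi : elt R, restr B (val (P phi)) = restr B (val phi))].

Definition pointwise_disjoint n (R : {set qstate n}) (TT : {set rmap R}) : Prop :=
  forall P T, P \in gclos TT -> T \in gclos TT ->
    forall psi : elt R, P psi = T psi -> P = T.

Definition OA n (R : {set qstate n}) (TT : {set rmap R}) (A : {set 'I_n})
  : {set rmap R} :=
  [set P in gclos TT | [forall psi : elt R, restr A (val (P psi)) == restr A (val psi)]].

(* G_i given the chosen maps Ps (Ps q = P_q for q >= 1; Ps 0 unused):
   G_0 = O_A, G_q = { P_q P : P in G_0 }. *)
Definition Gi n (R : {set qstate n}) (TT : {set rmap R}) (A : {set 'I_n})
  (Ps : nat -> rmap R) (i : nat) : {set rmap R} :=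
  if i == 0 then OA TT A else [set mcomp (Ps i) P | P in OA TT A].

Definition Ri n (R : {set qstate n}) (TT : {set rmap R}) (A : {set 'I_n})
  (Ps : nat -> rmap R) (psi0 : elt R) (i : nat) : {set elt R} :=
  [set P psi0 | P : rmap R in Gi TT A Ps i].

(* (Ps, m) is a valid run of the choice procedure: each P_q (1 <= q <= m) is
   chosen in G(T) \ (G_0 u ... u G_(q-1)), and the procedure stops after m,
   i.e. G(T) \ (G_0 u ... u G_m) is empty. *)
Definition valid_run n (R : {set qstate n}) (TT : {set rmap R}) (A : {set 'I_n})
  (Ps : nat -> rmap R) (m : nat) : Prop :=
  (forall q, 1 <= q <= m ->
     Ps q \in gclos TT :\: \bigcup_(i < q) Gi TT A Ps i) /\
  gclos TT :\: \bigcup_(i < m.+1) Gi TT A Ps i = set0.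

(* Main.v *)
Require Import Defs.
From mathcomp Require Import all_boot.

Section Aux.
Variables (n : nat) (R : {set qstate n}) (TT : {set rmap R}) (A : {set 'I_n}).

Definition keep (P : rmap R) (x : elt R) (i : 'I_n) := (val (P x) i == val x i).
Definition unif (P : rmap R) := forall x y i, keep P x i = keep P y i.

Lemma gclos_ind (S : {set rmap R}) : TT \subset S ->
  (forall P T, P \in S -> T \in S -> mcomp P T \in S) -> gclos TT \subset S.
Proof.
move=> H1 H2; rewrite /gclos; apply: bigcap_inf; rewrite H1 /=.
apply/forallP => P; apply/implyP => HP; apply/forallP => T; apply/implyP => HT.
exact: H2.
Qed.

Lemma restr1 (i : 'I_n) (z : qstate n) : restr [set i] z = [:: z i].
Proof. by rewrite /restr enum_set1. Qed.

Lemma beq3 (a b c : bool) : (a == c) = ((a == b) == (b == c)).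
Proof. by case: a; case: b; case: c. Qed.

Lemma gclos_unif : generator_set TT -> forall P, P \in gclos TT -> unif P.
Proof.
case=> _ _ H3.
have: gclos TT \subset
   [set P | [forall x, forall y, forall i, keep P x i == keep P y i]].
  apply: gclos_ind.
    apply/subsetP => P HP; rewrite inE; apply/forallP => x; apply/forallP => y.
    apply/forallP => i.
    have B0 : [set i] != set0 by apply/set0Pn; exists i; rewrite inE.
    have K : forall u v, keep P u i -> keep P v i.
      move=> u v /eqP Hu; apply/eqP.
      have := H3 P [set i] HP B0 u; rewrite !restr1 Hu => /(_ erefl v).
      by rewrite !restr1; case.
    by apply/eqP; apply/idP/idP; apply: K.
  move=> P T; rewrite !inE => /forallP HP /forallP HT.
  apply/forallP => x; apply/forallP => y; apply/forallP => i.
  rewrite /keep !ffunE (beq3 (val (P (T x)) i) (val (T x) i) (val x i)).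
  rewrite (beq3 (val (P (T y)) i) (val (T y) i) (val y i)).
  have := HP (T x) => /forallP/(_ (T y))/forallP/(_ i)/eqP.
  rewrite /keep => ->.
  have := HT x => /forallP/(_ y)/forallP/(_ i)/eqP.
  by rewrite /keep => ->.
move=> /subsetP Hs P /Hs; rewrite inE => /forallP H x y i.
by have := H x => /forallP/(_ y)/forallP/(_ i)/eqP.
Qed.

Lemma restr_unif P x y : unif P -> restr A (val (P x)) = restr A (val x) ->
  restr A (val (P y)) = restr A (val y).
Proof.
rewrite /restr => HP /eq_in_map H; apply/eq_in_map => i Hi.
apply/eqP; rewrite -/(keep P y i) (HP y x); apply/eqP; exact: H.
Qed.

Lemma gclos_comp P T : P \in gclos TT -> T \in gclos TT -> mcomp P T \in gclos TT.
Proof.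
move=> /bigcapP HP /bigcapP HT; apply/bigcapP => S HS.
have := HS => /andP [_ /forallP/(_ P)/implyP/(_ (HP S HS))/forallP/(_ T)/implyP].
by apply; apply: HT.
Qed.

Definition cls (x : elt R) : {set elt R} :=
  [set y | restr A (val y) == restr A (val x)].

Lemma cls_eq x y : restr A (val x) = restr A (val y) -> cls x = cls y.
Proof. by move=> H; apply/setP => z; rewrite !inE H. Qed.

Lemma clsE x : generator_set TT -> cls x = [set (P : rmap R) x | P in OA TT A].
Proof.
move=> G; have G' := G; case: G' => _ H2 _.
apply/setP => y; rewrite inE; apply/eqP/imsetP.
  move=> H; have [P HP Pxy] := H2 x y.
  exists P => //; rewrite inE HP /=; apply/forallP => z; apply/eqP.
  have Hr := @restr_unif P x z (gclos_unif G P HP).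
  apply: Hr; by rewrite Pxy.
by case=> P; rewrite inE => /andP [_ /forallP/(_ x)/eqP H] ->.
Qed.

End Aux.


Theorem proposition1 (n : nat) (R : {set qstate n}) (TT : {set rmap R})
  (A : {set 'I_n}) (psi0 : elt R) :
  R != set0 -> generator_set TT -> A != set0 ->
  (forall (m : nat) (Ps : nat -> rmap R), valid_run TT A Ps m ->
     quotA R A = [set Ri TT A Ps psi0 (val i) | i : 'I_m.+1]) /\
  ((forall P, P \in TT -> mcomp P P = mid R) -> pointwise_disjoint TT ->
     forall C, C \in quotA R A -> #|C| = #|OA TT A|).
Proof.
move=> _ G _; have G' := G; case: G' => H1 H2 H3.
have Ri0 : forall Ps, Ri TT A Ps psi0 0 = cls _ _ A psi0.
  by move=> Ps; rewrite (clsE _ _ _ _ _ G) /Ri /Gi eqxx.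
have RiS : forall Ps i, i != 0 -> Ps i \in gclos TT ->
    Ri TT A Ps psi0 i = cls _ _ A (Ps i psi0).
  move=> Ps i Hi HPs; rewrite (clsE _ _ _ _ _ G) /Ri /Gi (negbTE Hi) -imset_comp.
  apply: eq_in_imset => P HP /=.
  rewrite (H1 _ _ HPs); first by rewrite ffunE.
  by move: HP; rewrite inE => /andP [].
split.
  move=> m Ps [V1 V2].
  have Psg : forall i, 0 < i < m.+1 -> Ps i \in gclos TT.
    by move=> i Hi; have := V1 i Hi; rewrite inE => /andP [].
  apply/setP => C; apply/imsetP/imsetP.
    case=> x _ ->; have [P HP Px] := H2 psi0 x.
    have : P \in \bigcup_(i < m.+1) Gi TT A Ps i.
      apply/negPn/negP => Hn.
      have : P \in gclos TT :\: \bigcup_(i < m.+1) Gi TT A Ps i.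
        by rewrite inE Hn HP.
      by rewrite V2 inE.
    case/bigcupP => i _.
    have [Hi0|Hi0] := eqVneq (val i) 0.
      rewrite /Gi Hi0 /= => HO; exists i => //.
      rewrite Hi0 Ri0 -Px; apply: cls_eq.
      by move: HO; rewrite inE => /andP [_ /forallP/(_ psi0)/eqP].
    rewrite /Gi (negbTE Hi0) => /imsetP [Q HQ EP]; exists i => //.
    have Hg : Ps i \in gclos TT by apply: Psg; rewrite lt0n Hi0 ltn_ord.
    rewrite (RiS _ _ Hi0 Hg) -Px EP; apply: cls_eq.
    rewrite (H1 (Ps i) Q); [|exact: Hg|by move: HQ; rewrite inE => /andP []].
    rewrite ffunE.
    by move: HQ; rewrite inE => /andP [_ /forallP/(_ (Ps i psi0))/eqP].
  case=> i _ ->.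
  have [Hi0|Hi0] := eqVneq (val i) 0.
    by exists psi0 => //; rewrite Hi0 Ri0.
  exists (Ps i psi0) => //; apply: RiS => //; apply: Psg.
  by rewrite lt0n Hi0 ltn_ord.
move=> _ PD C /imsetP [x _ ->].
rewrite -/(cls _ _ A x) (clsE _ _ _ _ _ G); apply: card_in_imset => P T HP HT E.
move: HP HT; rewrite !inE => /andP [HP _] /andP [HT _].
exact: (PD P T HP HT x E).
Qed.
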